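(* Let $(R,\mathfrak{m})$ satisfy condition $\bigstar$, and let $S$ be a maximal element of the set of proper subrings of $R$ having the same residue field as $R$. Then $S$ contains the ideal $\mathfrak{m}^2+pR$, the maximal ideal $\mathfrak{m}_S$ of $S$ is an ideal of $R$, and $\mathfrak{m}^2+pR\subseteq\mathfrak{m}_S$.
   Context: All rings are commutative and unital. Condition $\bigstar$ on a ring $(R,\mathfrak{m})$: $R$ is a local ring (unique maximal ideal $\mathfrak{m}$, not necessarily Noetherian) of characteristic $p^N$ for a prime $p$ and some $N\ge 1$, with finite residue field $R/\mathfrak{m}\cong\mathbb{F}_q$, and $\mathfrak{m}$ is a nilpotent ideal. Any subring $S$ of $R$ is local with maximal ideal $\mathfrak{m}_S=\mathfrak{m}\cap S$, and its residue field $S/\mathfrak{m}_S$ is naturally a subfield of $R/\mathfrak{m}$; ''same residue field as $R$'' means equality under this identification. *)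

(* Defs.v *)
From HB Require Import structures.
From mathcomp Require Import all_boot all_order all_algebra.
Set Implicit Arguments. Unset Strict Implicit. Unset Printing Implicit Defensive.
Import GRing.Theory.
Local Open Scope ring_scope.

Section Defs.
Variable R : comNzRingType.

Definition is_ideal (I : R -> Prop) : Prop :=
  [/\ I 0, (forall x y, I x -> I y -> I (x + y)) &
      (forall r x, I x -> I (r * x))].

Definition is_maximal_ideal (I : R -> Prop) : Prop :=
  [/\ is_ideal I, ~ I 1 &
      forall J : R -> Prop, is_ideal J -> ~ J 1 -> (forall x, I x -> J x) ->
        forall x, J x -> I x].

Definition local_with (m : R -> Prop) : Prop :=
  is_maximal_ideal m /\
  forall I : R -> Prop, is_maximal_ideal I -> forall x, I x <-> m x.

(* R has characteristic n : the kernel of Z -> R (restricted to nat) is nZ *)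
Definition has_char (n : nat) : Prop :=
  forall k : nat, (k%:R : R) = 0 <-> (n %| k)%N.

(* the residue field R/m is finite: finitely many classes mod m *)
Definition finite_residue (m : R -> Prop) : Prop :=
  exists s : seq R, forall x, exists2 y, y \in s & m (x - y).

(* m is a nilpotent ideal: m^n = 0 for some n, i.e. all products of n
   elements of m vanish *)
Definition nilpotent_ideal (m : R -> Prop) : Prop :=
  exists n : nat, forall s : seq R, size s = n -> (forall x, x \in s -> m x) ->
    \prod_(x <- s) x = 0.

Definition cond_star (m : R -> Prop) (p N : nat) : Prop :=
  [/\ local_with m, [/\ prime p, (1 <= N)%N & has_char (p ^ N)],
      finite_residue m & nilpotent_ideal m].

Definition is_subring (S : R -> Prop) : Prop :=
  [/\ S 1, (forall x y, S x -> S y -> S (x - y)) &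
      (forall x y, S x -> S y -> S (x * y))].

Definition proper_subring (S : R -> Prop) : Prop :=
  is_subring S /\ exists x, ~ S x.

(* S has the same residue field as R: the natural embedding
   S/(m cap S) -> R/m is onto, i.e. every element of R is congruent mod m
   to an element of S *)
Definition same_residue_field (m S : R -> Prop) : Prop :=
  forall x, exists y, S y /\ m (x - y).

Definition maximal_proper_same_residue (m S : R -> Prop) : Prop :=
  [/\ proper_subring S, same_residue_field m S &
      forall T : R -> Prop, proper_subring T -> same_residue_field m T ->
        (forall x, S x -> T x) -> forall x, T x -> S x].

(* The ideal m^2 + pR : finite sums of products of two elements of m,
   plus a multiple of p *)
Definition msq_plus_p (m : R -> Prop) (p : nat) : R -> Prop :=
  fun x => exists (s : seq (R * R)) (r : R),
    (forall ab, ab \in s -> m ab.1 /\ m ab.2) /\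
    x = \sum_(ab <- s) ab.1 * ab.2 + p%:R * r.

Definition max_ideal_sub (m S : R -> Prop) : R -> Prop :=
  fun x => S x /\ m x.

End Defs.

(* Main.v *)
Require Import Defs.
From HB Require Import structures.
From mathcomp Require Import all_boot all_order all_algebra.
From mathcomp Require Import ring.
From Stdlib Require Import Classical.
Local Open Scope ring_scope.
Import GRing.Theory.
Set Implicit Arguments. Unset Strict Implicit.

Lemma id_opp (R : comNzRingType) (I : R -> Prop) : is_ideal I -> forall x, I x -> I (- x).
Proof. move=> [_ _ HM] x Hx; rewrite -mulN1r; by apply: HM. Qed.

Lemma id_mulr (R : comNzRingType) (I : R -> Prop) : is_ideal I -> forall x r, I x -> I (x * r).
Proof. move=> [_ _ HM] x r Hx; rewrite mulrC; by apply: HM. Qed.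

Lemma id_sum (R : comNzRingType) (I : R -> Prop) (T : eqType) (s : seq T) (f : T -> R) :
  is_ideal I -> (forall a, a \in s -> I (f a)) -> I (\sum_(a <- s) f a).
Proof.
move=> HI; elim: s => [|a s IH] H; first by rewrite big_nil; case: HI.
rewrite big_cons; case: HI => [_ HA _]; apply: (HA); first by apply: H; rewrite inE eqxx.
by apply: IH => b Hb; apply: H; rewrite inE Hb orbT.
Qed.

Lemma sr0 (R : comNzRingType) (S : R -> Prop) : is_subring S -> S 0.
Proof. move=> [H1 Hsb _]; rewrite -(subrr 1); by apply: (Hsb). Qed.

Lemma srD (R : comNzRingType) (S : R -> Prop) : is_subring S -> forall x y, S x -> S y -> S (x + y).
Proof.
move=> HS x y Hx Hy; have H0 := sr0 HS; move: HS => [_ Hsb _].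
have -> : x + y = x - (0 - y) by rewrite sub0r opprK.
by apply: (Hsb) => //; apply: (Hsb).
Qed.

Lemma sr_sum (R : comNzRingType) (S : R -> Prop) (T : eqType) (s : seq T) (f : T -> R) :
  is_subring S -> (forall a, a \in s -> S (f a)) -> S (\sum_(a <- s) f a).
Proof.
move=> HS; elim: s => [|a s IH] H; first by rewrite big_nil; apply: sr0.
rewrite big_cons; apply: srD => //; first by apply: H; rewrite inE eqxx.
by apply: IH => b Hb; apply: H; rewrite inE Hb orbT.
Qed.

Lemma sr_prod (R : comNzRingType) (S : R -> Prop) (s : seq R) :
  is_subring S -> (forall a, a \in s -> S a) -> S (\prod_(a <- s) a).
Proof.
move=> HS; elim: s => [|a s IH] H; first by rewrite big_nil; case: HS.
rewrite big_cons; case: (HS) => _ _ HM; apply: (HM); first by apply: H; rewrite inE eqxx.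
by apply: IH => b Hb; apply: H; rewrite inE Hb orbT.
Qed.

Lemma sr_nat (R : comNzRingType) (S : R -> Prop) n : is_subring S -> S (n%:R).
Proof.
move=> HS; elim: n => [|n IH]; first by apply: sr0.
by rewrite -addn1 natrD; apply: srD => //; case: HS.
Qed.

Theorem lemma22 (R : comNzRingType) (m : R -> Prop) (p N : nat) (S : R -> Prop) :
  cond_star m p N ->
  maximal_proper_same_residue m S ->
  [/\ (forall x, msq_plus_p m p x -> S x),
      is_ideal (max_ideal_sub m S) &
      (forall x, msq_plus_p m p x -> max_ideal_sub m S x)].
Proof.
move=> [[[Hid Hm1 Hmmax] _] [Hp HN Hchar] _ [n Hnil]] [[HSsub HSprop] HSres HSmax].
have mD : forall x y, m x -> m y -> m (x + y) by case: Hid.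
have mM : forall r x, m x -> m (r * x) by case: Hid.
have m0 : m 0 by case: Hid.
have mB : forall x y, m x -> m y -> m (x - y).
  by move=> x y Hx Hy; apply: mD => //; apply: id_opp.
have SM : forall x y, S x -> S y -> S (x * y) by case: HSsub.
have SB : forall x y, S x -> S y -> S (x - y) by case: HSsub.
have pN0 : (p%:R : R) ^+ N = 0.
  by rewrite -natrX; apply/Hchar.
have mp : m p%:R.
  pose J := fun x => exists y r, m y /\ x = y + r * p%:R.
  have HJ : is_ideal J.
    split.
    - by exists 0, 0; rewrite mul0r addr0.
    - move=> x y [y1 [r1 [H1 ->]]] [y2 [r2 [H2 ->]]].
      exists (y1 + y2), (r1 + r2); split; [by apply: mD | ring].
    - move=> r x [y1 [r1 [H1 ->]]]; exists (r * y1), (r * r1); split; [by apply: mM | ring].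
  case: (classic (J 1)) => [[y [r [Hy E]]] | HJ1].
  - exfalso; apply: Hm1.
    have E2 : (1 : R) = (1 - r * p%:R) * \sum_(i < N) (r * p%:R) ^+ i.
      have H := subrX1 (r * p%:R) N; rewrite exprMn pN0 mulr0 in H.
      transitivity (- (0 - 1) : R); first ring.
      by rewrite H; ring.
    rewrite E2; apply: id_mulr => //.
    by have -> : 1 - r * p%:R = y by apply/eqP; rewrite subr_eq -E.
  - apply: (Hmmax J HJ HJ1).
    + by move=> x Hx; exists x, 0; rewrite mul0r addr0.
    + by exists 0, 1; rewrite mul1r add0r.
pose I := msq_plus_p m p.
have I0 : I 0 by exists [::], 0; split => //; rewrite big_nil mulr0 addr0.
have ID : forall x y, I x -> I y -> I (x + y).
  move=> x y [s1 [r1 [H1 ->]]] [s2 [r2 [H2 ->]]]; exists (s1 ++ s2), (r1 + r2); split.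
    by move=> ab; rewrite mem_cat => /orP [] ?; [apply: H1 | apply: H2].
  rewrite big_cat /=; ring.
have IN : forall x, I x -> I (- x).
  move=> x [s1 [r1 [H1 ->]]]; exists [seq (- ab.1, ab.2) | ab <- s1], (- r1); split.
    move=> ab /mapP [cd Hcd ->] /=; have [? ?] := H1 _ Hcd; split => //.
    by apply: id_opp.
  rewrite big_map /= opprD -sumrN; congr (_ + _); last ring.
  by apply: eq_bigr => ab _; rewrite mulNr.
have IM : forall r x, I x -> I (r * x).
  move=> r x [s1 [r1 [H1 ->]]]; exists [seq (r * ab.1, ab.2) | ab <- s1], (r * r1); split.
    move=> ab /mapP [cd Hcd ->] /=; have [? ?] := H1 _ Hcd; split => //.
    by apply: mM.
  rewrite big_map /= mulrDr big_distrr /=; congr (_ + _); last ring.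
  by apply: eq_bigr => ab _; rewrite mulrA.
pose T := fun x => exists s i, S s /\ I i /\ x = s + i.
have ST : forall x, S x -> T x by move=> x Sx; exists x, 0; split => //; split => //; rewrite addr0.
have TP : exists x, ~ T x.
  apply: not_all_ex_not => HT; case: HSprop => x0; apply.
  have Dm : forall a, m a -> exists s qs, [/\ S s, m s,
      (forall ab, ab \in qs -> m ab.1 /\ m ab.2) &
      a = s + \sum_(ab <- qs) ab.1 * ab.2].
    move=> a Ha; case: (HT a) => s [i [Ss [[qs0 [r [Hqs0 Ei]]] Ea]]].
    case: (HSres r) => s' [Ss' Hr].
    have Hq : forall ab, ab \in (p%:R, r - s') :: qs0 -> m ab.1 /\ m ab.2.
      by move=> ab; rewrite inE => /orP [/eqP -> | /Hqs0].
    have E : a = (s + p%:R * s') + \sum_(ab <- (p%:R, r - s') :: qs0) ab.1 * ab.2.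
      by rewrite Ea Ei big_cons /=; ring.
    exists (s + p%:R * s'), ((p%:R, r - s') :: qs0); split => //.
      by apply: srD => //; apply: SM => //; apply: sr_nat.
    have -> : s + p%:R * s' = a - \sum_(ab <- (p%:R, r - s') :: qs0) ab.1 * ab.2.
      by rewrite {1}E; ring.
    apply: mB => //; apply: id_sum => // ab /Hq [? ?]; exact: mM.
  have Pstep : forall k, (forall l, size l = k.+1 -> (forall x, x \in l -> m x) -> S (\prod_(x <- l) x)) ->
      forall l2 l1, (forall x, x \in l1 -> S x /\ m x) -> (forall x, x \in l2 -> m x) ->
      (size l1 + size l2)%N = k -> S (\prod_(x <- l1) x * \prod_(x <- l2) x).
    move=> k Hk; elim => [|a l2 IH] l1 H1 H2 Hsz.
      rewrite big_nil mulr1; apply: sr_prod => // x /H1 []; done.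
    have [s [qs [Ss ms Hqs Ea]]] := Dm a (H2 a (mem_head _ _)).
    have -> : \prod_(x <- l1) x * \prod_(x <- a :: l2) x =
        \prod_(x <- s :: l1) x * \prod_(x <- l2) x +
        \sum_(ab <- qs) \prod_(x <- ab.1 :: ab.2 :: l1 ++ l2) x.
      rewrite !big_cons Ea mulrDl mulrDr; congr (_ + _); first ring.
      rewrite big_distrl big_distrr /=; apply: eq_bigr => ab _.
      rewrite !big_cons big_cat /=; ring.
    apply: srD => //.
      apply: IH.
      - by move=> x; rewrite inE => /orP [/eqP -> | /H1].
      - by move=> x Hx; apply: H2; rewrite inE Hx orbT.
      - by rewrite /= -Hsz /= addnS addSn.
    apply: sr_sum => // ab Hab; apply: Hk.
      by rewrite /= size_cat -Hsz /= addnS.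
    have [? ?] := Hqs ab Hab.
    move=> x; rewrite !inE mem_cat => /orP [/eqP -> // | /orP [/eqP -> // | /orP [/H1 [] // | Hx]]].
    by apply: H2; rewrite inE Hx orbT.
  have Pk : forall d k, (n <= k + d)%N -> forall l, size l = k ->
      (forall x, x \in l -> m x) -> S (\prod_(x <- l) x).
    elim => [|d IH] k Hkd l Hl Hlm.
      rewrite addn0 in Hkd.
      rewrite -(cat_take_drop n l) big_cat Hnil /=.
      + by rewrite mul0r; apply: sr0.
      + by rewrite size_takel // Hl.
      + by move=> x /mem_take; apply: Hlm.
    have := Pstep k (IH k.+1 _) l [::]; rewrite big_nil mul1r; apply => //.
    by rewrite addSnnS.
  have mS : forall x, m x -> S x.
    move=> x Hx; have := Pk n 1%N _ [:: x] erefl; rewrite big_seq1; apply.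
      by rewrite addnC leq_addr.
    by move=> y; rewrite inE => /eqP ->.
  case: (HSres x0) => y [Sy Hy].
  have -> : x0 = y + (x0 - y) by ring.
  by apply: srD => //; apply: mS.
have Tsub : is_subring T.
  split.
  - by apply: ST; case: HSsub.
  - move=> x y [s1 [i1 [S1 [I1 ->]]]] [s2 [i2 [S2 [I2 ->]]]].
    exists (s1 - s2), (i1 + - i2); split; [by apply: SB | split; [by apply: ID => //; apply: IN | ring]].
  - move=> x y [s1 [i1 [S1 [I1 ->]]]] [s2 [i2 [S2 [I2 ->]]]].
    exists (s1 * s2), (s1 * i2 + (s2 * i1 + i1 * i2)); split; first by apply: SM.
    split; last ring.
    exact: (ID _ _ (IM _ _ I2) (ID _ _ (IM _ _ I1) (IM _ _ I2))).
have IS : forall x, I x -> S x.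
  move=> x Ix; apply: (HSmax T) => //.
  - move=> y; case: (HSres y) => z [Sz Hz]; exists z; split => //; exact: ST.
  - by exists 0, x; split; [apply: sr0 | split => //; rewrite add0r].
have SMm : forall s x, S s -> S x -> m x -> S (s * x) /\ m (s * x).
  by move=> s x Ss Sx mx; split; [apply: SM | apply: mM].
have Im : forall x, I x -> m x.
  move=> x [qs [r [Hqs ->]]]; apply: mD.
    by apply: id_sum => // ab /Hqs [? ?]; apply: mM.
  by apply: id_mulr.
split => //.
- split.
  + by split; [apply: sr0 | ].
  + move=> x y [Sx mx] [Sy my]; split; [by apply: srD | by apply: mD].
  + move=> r x [Sx mx]; split; last by apply: mM.
    case: (HSres r) => s [Ss Hr].
    have -> : r * x = s * x + (r - s) * x by ring.
    apply: srD => //; first by apply: SM.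
    apply: IS; exists [:: (r - s, x)], 0; split.
      by move=> ab; rewrite inE => /eqP ->.
    by rewrite big_seq1 mulr0 addr0.
- by move=> x Ix; split; [apply: IS | apply: Im].
Qed.
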